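(* Let $I$ be a monomial ideal of $R=K[x_1,\ldots,x_d]$ ($K$ a field). The function $\exp:\mathbb{R}_+\to\mathcal{T}$, $\exp(r)=\overline{I^r}$, where $\mathbb{R}_+$ carries the Euclidean topology and $\mathcal{T}=\{\overline{I^r}\mid r\in\mathbb{R}_+\}$ carries the discrete topology, is left continuous. Equivalently, for every $r>0$ there exists $\varepsilon_0>0$ such that $\overline{I^{r-\varepsilon}}=\overline{I^r}$ for all $0<\varepsilon<\varepsilon_0$.
   Context: $\mathbb{R}_+$ denotes the non-negative reals, $\mathbb{N}$ the non-negative integers, and $\mathbf{x}^{\mathbf{a}}=x_1^{a_1}\cdots x_d^{a_d}$. $NP(I)$ is the convex hull in $\mathbb{R}^d$ of $\{\mathbf{a}\in\mathbb{N}^d\mid \mathbf{x}^{\mathbf{a}}\in I\}$. For real $t\ge0$, the $t$-th real power of $I$ is $\overline{I^t}=(\{\mathbf{x}^{\mathbf{a}}\mid \mathbf{a}\in t\cdot NP(I)\cap\mathbb{N}^d\})$, where $t\cdot NP(I)=\{t\mathbf{v}\mid \mathbf{v}\in NP(I)\}$. *)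

(* Defs.v *)
From mathcomp Require Import all_boot all_order all_algebra.
From mathcomp Require Import mpoly.
From mathcomp Require Import reals.
Set Implicit Arguments. Unset Strict Implicit. Unset Printing Implicit Defensive.
Import Order.TTheory GRing.Theory Num.Theory.
Local Open Scope ring_scope.

Section Defs.
Variables (K : fieldType) (d : nat).

Definition ideal_gen (S : {mpoly K[d]} -> Prop) (p : {mpoly K[d]}) : Prop :=
  exists l : seq ({mpoly K[d]} * {mpoly K[d]}),
    (forall q, q \in l -> S q.2) /\ p = \sum_(q <- l) q.1 * q.2.

Definition monomial_ideal (G : 'X_{1..d} -> Prop) : {mpoly K[d]} -> Prop :=
  ideal_gen (fun q => exists2 m, G m & q = 'X_[m]).

Variable R : realType.

Definition NP (I : {mpoly K[d]} -> Prop) (v : 'I_d -> R) : Prop :=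
  exists l : seq ('X_{1..d} * R),
    [/\ forall q, q \in l -> I 'X_[q.1] /\ 0 <= q.2,
        \sum_(q <- l) q.2 = 1
      & forall i : 'I_d, v i = \sum_(q <- l) q.2 * ((q.1 i)%:R)].

Definition in_scaled_NP (I : {mpoly K[d]} -> Prop) (t : R) (a : 'X_{1..d}) : Prop :=
  exists2 v, NP I v & forall i : 'I_d, (a i)%:R = t * v i.

(* The t-th real power  \overline{I^t} = (x^a | a in t*NP(I) cap N^d). *)
Definition real_power (I : {mpoly K[d]} -> Prop) (t : R) : {mpoly K[d]} -> Prop :=
  monomial_ideal (in_scaled_NP I t).

End Defs.

(* Main.v *)
Require Import Defs.
From mathcomp Require Import all_boot all_order all_algebra.
From mathcomp Require Import mpoly.
From mathcomp Require Import reals.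
From mathcomp Require Import boolp classical_sets topology normedtype.
From Stdlib Require Import Classical.
Import Order.TTheory GRing.Theory Num.Theory.
Import numFieldNormedType.Exports.
Local Open Scope ring_scope.
Set Implicit Arguments. Unset Strict Implicit.
Local Open Scope classical_set_scope.
Section Clo.
Variables (R : realType) (n d : nat) (m : 'I_n -> 'I_d -> R) (b : 'I_d -> R).

Definition Qr (t : R) := exists lam : 'I_n -> R,
  [/\ forall j, 0 <= lam j, \sum_j lam j = 1 &
      forall i, t * (\sum_j lam j * m j i) <= b i].

Lemma cont_sum (T : topologicalType) (I : Type) (s : seq I) (f : I -> T -> R) :
  (forall j, continuous (f j)) -> continuous (fun v => \sum_(j <- s) f j v).
Proof.
move=> cf; elim: s => [|j s IH].
  under eq_fun do rewrite big_nil; exact: cst_continuous.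
under eq_fun do rewrite big_cons.
move=> x; apply: continuousD; [exact: cf | exact: IH].
Qed.

Lemma closedQ (r : R) : 0 < r ->
  (forall e, 0 < e -> exists t, [/\ r - e < t, t <= r & Qr t]) -> Qr r.
Proof.
move=> r0 H.
pose A (k : 'I_n.+1) : set R := if k == ord0 then `[0, r] else `[0, 1].
pose S := [set v : 'rV[R]_n.+1 | forall k, A k (v ord0 k)].
have cS : compact S.
  apply: rV_compact => k; rewrite /A; case: ifP => _; exact: segment_compact.
pose tt (v : 'rV[R]_n.+1) := v ord0 ord0.
pose la (v : 'rV[R]_n.+1) j := v ord0 (lift ord0 j).
have ctt : continuous tt by move=> v; exact: coord_continuous.
have cla : forall j, continuous (fun v => la v j).
  by move=> j v; exact: coord_continuous.
pose B1 := [set v | \sum_j la v j <= 1] `&` [set v | 1 <= \sum_j la v j].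
pose B2 := \bigcap_(i in setT) [set v | tt v * (\sum_j la v j * m j i) <= b i].
have csum : continuous (fun v => \sum_j la v j).
  exact: cont_sum.
have cB1 : closed B1.
  apply: closedI.
    exact: ((continuous_closedP _).1 csum _ (@closed_le _ 1)).
  exact: ((continuous_closedP _).1 csum _ (@closed_ge _ 1)).
have cB2 : closed B2.
  apply: closed_bigI => i _.
  have cf : continuous (fun v => tt v * (\sum_j la v j * m j i)).
    move=> v; apply: (@continuousM _ _ tt (fun v => \sum_j la v j * m j i)).
      exact: ctt.
    apply: cont_sum => j w.
    apply: (@continuousM _ _ (fun v => la v j) (fun=> m j i)).
      exact: cla.
    exact: cst_continuous.
  exact: ((continuous_closedP _).1 cf _ (@closed_le _ (b i))).
have cK : compact (S `&` (B1 `&` B2)).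
  apply: compact_closedI => //; exact: closedI.
have cT : compact [set tt x | x in S `&` (B1 `&` B2)].
  apply: continuous_compact => //.
  exact: continuous_subspaceT.
have clT := compact_closed (@Rhausdorff R) cT.
have : closure [set tt x | x in S `&` (B1 `&` B2)] r.
  move=> U /nbhs_ballP [e e0 sU].
  have em0 : 0 < Order.min e r by rewrite lt_min e0 r0.
  have [t [rt tr [lam [l0 l1 lb]]]] := H (Order.min e r) em0.
  have t0 : 0 <= t.
    apply/ltW; apply: le_lt_trans rt; rewrite subr_ge0; by rewrite ge_min lexx orbT.
  have lam1 : forall j, lam j <= 1.
    move=> j; rewrite -l1 (bigD1 j) //= lerDl; exact: sumr_ge0.
  pose v : 'rV[R]_n.+1 := \row_k (if unlift ord0 k is Some j then lam j else t).
  have vt : tt v = t by rewrite /tt mxE unlift_none.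
  have vl : forall j, la v j = lam j by move=> j; rewrite /la mxE liftK.
  exists t; split; last first.
    apply: sU; rewrite /ball /= ger0_norm ?subr_ge0 //.
    rewrite ltrBlDl -ltrBlDr; apply: le_lt_trans rt; rewrite lerB //; by rewrite ge_min lexx.
  exists v => //; split; last split.
  - move=> k; rewrite /A; case: (unliftP ord0 k) => [j ->|->].
      rewrite (_ : (lift ord0 j == ord0) = false); last by apply/negbTE; rewrite eq_sym neq_lift.
      rewrite -/(la v j) vl /=.
      by rewrite /= in_itv /= l0 lam1.
    by rewrite eqxx -/(tt v) vt; rewrite /= in_itv /= t0 tr.
  - by rewrite /B1 /=; under eq_bigr do rewrite vl; rewrite l1 lexx.
  - move=> i _ /=; rewrite vt; under eq_bigr do rewrite vl; exact: lb.
move/clT => [v [Sv [[B1a B1b] B2v]] tv].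
exists (la v); split.
- move=> j; have := Sv (lift ord0 j); rewrite /A /=.
  by rewrite in_itv /= => /andP[].
- by apply/eqP; rewrite eq_le; apply/andP.
- by move=> i; rewrite -tv; apply: B2v.
Qed.
End Clo.
Local Close Scope classical_set_scope.

Section Dickson.
Variable d : nat.

Definition domk (k : nat) (b a : 'X_{1..d}) := forall i : 'I_d, (i < k)%N -> (b i <= a i)%N.

Lemma levels (S : 'X_{1..d} -> Prop) (k : nat) (ik : 'I_d)
  (IH : forall S' : 'X_{1..d} -> Prop, exists F : seq 'X_{1..d},
     (forall m, m \in F -> S' m) /\ forall a, S' a -> exists2 m, m \in F & domk k m a) :
  forall J, exists F : seq 'X_{1..d}, (forall m, m \in F -> S m) /\
    forall a, S a -> (a ik < J)%N -> exists2 m, m \in F & domk k m a /\ m ik = a ik.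
Proof.
elim=> [|J [F [FS FP]]].
  by exists [::]; split => // a _.
have [F' [F'S F'P]] := IH (fun a => S a /\ a ik = J).
exists (F ++ F'); split.
  by move=> m; rewrite mem_cat => /orP[/FS|/F'S[]].
move=> a Sa; rewrite ltnS leq_eqVlt => /orP[/eqP aJ|aJ].
  have [m mF' dm] := F'P a (conj Sa aJ).
  exists m; first by rewrite mem_cat mF' orbT.
  by split => //; have [_ ->] := F'S m mF'.
have [m mF dm] := FP a Sa aJ.
by exists m => //; rewrite mem_cat mF.
Qed.

Lemma dickson_k k : forall S : 'X_{1..d} -> Prop, exists F : seq 'X_{1..d},
  (forall m, m \in F -> S m) /\ forall a, S a -> exists2 m, m \in F & domk k m a.
Proof.
elim: k => [|k IH] S.
  case: (classic (exists x, S x)) => [[x Sx]|nS].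
    by exists [:: x]; split => [m|a _]; [rewrite inE => /eqP -> | exists x; rewrite ?inE].
  by exists [::]; split => // a Sa; case: nS; exists a.
case: (ltnP k d) => [kd|dk]; last first.
  have [F [FS FP]] := IH S; exists F; split => // a Sa.
  have [m mF dm] := FP a Sa; exists m => // i ik; apply: dm.
  by rewrite ltnS leq_eqVlt in ik; case/orP: ik => // /eqP ik; move: (ltn_ord i); rewrite ik ltnNge dk.
pose ik : 'I_d := Ordinal kd.
have [F [FS FP]] := IH S.
pose KK := (\max_(b <- F) b ik)%N.
have [F2 [F2S F2P]] := @levels S k ik IH KK.
exists (F ++ F2); split.
  by move=> m; rewrite mem_cat => /orP[/FS|/F2S].
move=> a Sa; case: (ltnP (a ik) KK) => [aK|Ka].
  have [m mF [dm e]] := F2P a Sa aK.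
  exists m; first by rewrite mem_cat mF orbT.
  move=> i; rewrite ltnS leq_eqVlt => /orP[/eqP ii|ii]; last exact: dm.
  have -> : i = ik by apply: val_inj.
  by rewrite e.
have [m mF dm] := FP a Sa.
exists m; first by rewrite mem_cat mF.
move=> i; rewrite ltnS leq_eqVlt => /orP[/eqP ii|ii]; last exact: dm.
have -> : i = ik by apply: val_inj.
apply: leq_trans Ka; exact: (@leq_bigmax_seq _ F xpredT (fun b : 'X_{1..d} => b ik) m mF isT).
Qed.

Lemma dickson (S : 'X_{1..d} -> Prop) : exists F : seq 'X_{1..d},
  (forall m, m \in F -> S m) /\ forall a, S a -> exists2 m, m \in F & (m <= a)%MM.
Proof.
have [F [FS FP]] := dickson_k d S; exists F; split => // a Sa.
have [m mF dm] := FP a Sa; exists m => //; apply/mnm_lepP => i; exact: dm.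
Qed.
End Dickson.

Section NPsec.
Variables (K : fieldType) (d : nat) (R : realType) (G : 'X_{1..d} -> Prop).
Let I := monomial_ideal (K := K) G.
Let EI (a : 'X_{1..d}) := I 'X_[a].

Lemma ideal_mul (p q : {mpoly K[d]}) : I p -> I (q * p).
Proof.
move=> [l [lS ->]].
exists [seq (q * x.1, x.2) | x <- l]; split.
  by move=> x /mapP [y yl ->] /=; apply: lS.
by rewrite big_distrr big_map; apply: eq_bigr => x _ /=; rewrite mulrA.
Qed.

Lemma EI_up a b : EI a -> (a <= b)%MM -> EI b.
Proof.
move=> Ea /mnm_lepP ab.
have -> : b = ((b - a) + a)%MM.
  by apply/mnmP => i; rewrite mnmDE mnmBE subnK.
by rewrite /EI mpolyXD; apply: ideal_mul.
Qed.

Definition NPc (v : 'I_d -> R) (c : R) :=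
  exists l : seq ('X_{1..d} * R),
    [/\ forall q, q \in l -> EI q.1 /\ 0 <= q.2,
        \sum_(q <- l) q.2 = c
      & forall i : 'I_d, v i = \sum_(q <- l) q.2 * ((q.1 i)%:R)].

Lemma NPE v : NP I v <-> NPc v 1.
Proof. by []. Qed.

Lemma NPc0 : NPc (fun _ => 0) 0.
Proof. exists [::]; split; [by [] | by rewrite big_nil | by move=> i; rewrite big_nil]. Qed.

Lemma NPc_ext v w c : (forall i, v i = w i) -> NPc v c -> NPc w c.
Proof. by move=> e [l [h1 h2 h3]]; exists l; split => // i; rewrite -e. Qed.

Lemma NPcD v w c c' : NPc v c -> NPc w c' -> NPc (fun i => v i + w i) (c + c').
Proof.
move=> [l [h1 h2 h3]] [l' [h1' h2' h3']]; exists (l ++ l'); split.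
- by move=> q; rewrite mem_cat => /orP[/h1|/h1'].
- by rewrite big_cat h2 h2'.
- by move=> i; rewrite big_cat h3 h3'.
Qed.

Lemma NPcZ v c k : 0 <= k -> NPc v c -> NPc (fun i => k * v i) (k * c).
Proof.
move=> k0 [l [h1 h2 h3]]; exists [seq (q.1, k * q.2) | q <- l]; split.
- move=> q /mapP [x xl ->] /=; have [? ?] := h1 x xl; split => //.
  exact: mulr_ge0.
- by rewrite big_map -h2 mulr_sumr.
- by move=> i; rewrite big_map h3 mulr_sumr; apply: eq_bigr => q _; rewrite mulrA.
Qed.

Lemma NPc_sum (J : Type) (s : seq J) (f : J -> 'I_d -> R) (c : J -> R) :
  (forall j, NPc (f j) (c j)) ->
  NPc (fun i => \sum_(j <- s) f j i) (\sum_(j <- s) c j).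
Proof.
move=> h; elim: s => [|j s IH].
  rewrite big_nil; apply: (NPc_ext _ NPc0) => i; by rewrite big_nil.
rewrite big_cons; apply: (NPc_ext _ (NPcD (h j) IH)) => i; by rewrite big_cons.
Qed.

Lemma NP_shift v (i : 'I_d) (k : nat) :
  NPc v 1 -> NPc (fun j => v j + (k%:R * (i == j)%:R)) 1.
Proof.
move=> [l [h1 h2 h3]].
pose sh (q : 'X_{1..d}) := [multinom (q j + (i == j) * k)%N | j < d].
exists [seq (sh q.1, q.2) | q <- l]; split.
- move=> q /mapP [x xl ->] /=; have [? ?] := h1 x xl; split => //.
  apply: EI_up; first eassumption.
  by apply/mnm_lepP => j; rewrite mnmE leq_addr.
- by rewrite big_map.
- move=> j; rewrite big_map h3.
  under [X in _ = X]eq_bigr do rewrite /= mnmE natrD mulrDr.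
  rewrite big_split /=; congr (_ + _).
  by rewrite -mulr_suml h2 mul1r natrM mulrC.
Qed.

Lemma NP_add1 v (i : 'I_d) (s : R) :
  NPc v 1 -> 0 <= s -> NPc (fun j => v j + s * (i == j)%:R) 1.
Proof.
move=> hv s0.
pose k := Num.Def.archi_bound s.
have sk : s < k%:R by apply: archi_boundP.
have k0 : 0 < k%:R :> R by apply: le_lt_trans sk.
pose th := s / k%:R.
have th0 : 0 <= th by apply: divr_ge0 => //; apply: ltW.
have th1 : 0 <= 1 - th by rewrite subr_ge0 ler_pdivrMr // mul1r ltW.
have := NPcD (NPcZ th1 hv) (NPcZ th0 (NP_shift i k hv)).
rewrite !mulr1 subrK; apply: NPc_ext => j.
rewrite mulrDr addrA -mulrDl subrK mul1r /th mulrA divfK //.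
by rewrite gt_eqF.
Qed.

Lemma NP_up v w : NPc v 1 -> (forall i, v i <= w i) -> NPc w 1.
Proof.
move=> hv vw.
case: (ltnP 0 d) => [dpos|d0]; last first.
  by apply: (NPc_ext _ hv) => i; have := leq_trans (ltn_ord i) d0.
pose dd : R := d%:R.
have dd0 : 0 < dd by rewrite ltr0n.
have ddi : 0 <= dd^-1 by rewrite invr_ge0 ltW.
have dv : forall i, 0 <= w i - v i by move=> i; rewrite subr_ge0.
have h := @NPc_sum 'I_d (index_enum 'I_d)
  (fun i j => dd^-1 * (v j + (dd * (w i - v i)) * (i == j)%:R)) (fun _ => dd^-1 * 1)
  (fun i => NPcZ ddi (NP_add1 i hv (mulr_ge0 (ltW dd0) (dv i)))).
have ddV : dd^-1 * dd = 1 by apply: mulVf; rewrite gt_eqF.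
move: h; rewrite sumr_const card_ord mulr1 -mulr_natr -/dd ddV.
apply: NPc_ext => j /=.
under eq_bigr do rewrite mulrDr.
rewrite big_split /= sumr_const card_ord -mulr_natr -/dd.
rewrite [X in _ + X = _](bigD1 j) //= eqxx mulr1 big1; last first.
  by move=> i /negbTE ->; rewrite mulr0 mulr0.
rewrite addr0 mulrAC ddV mul1r mulrA ddV mul1r.
by rewrite addrC subrK.
Qed.
Lemma sum_pick n (x : 'I_n) (F : 'I_n -> R) :
  \sum_(j < n) (((x : nat) == j)%:R * F j) = F x.
Proof.
rewrite (bigD1 x) //= eqxx mul1r big1 ?addr0 // => j jx.
case: eqP => [h|_]; last by rewrite mul0r.
by move: jx; rewrite (val_inj h) eqxx.
Qed.

Definition mE (E : seq 'X_{1..d}) : 'I_(size E) -> 'I_d -> R :=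
  fun j i => ((nth 0%MM E j) i)%:R.
Arguments mE : clear implicits.

Lemma R1 (E : seq 'X_{1..d}) (hE : forall a, EI a -> has (fun m => (m <= a)%MM) E)
  t a : 0 <= t -> in_scaled_NP I t a -> Qr (mE E) (fun i => (a i)%:R) t.
Proof.
move=> t0 [v [l [h1 h2 h3]] hv].
pose jf (b : 'X_{1..d}) : nat := find (fun m => (m <= b)%MM) E.
have jlt : forall q, q \in l -> (jf q.1 < size E)%N.
  by move=> q ql; rewrite -has_find; apply: hE; have [] := h1 q ql.
exists (fun j : 'I_(size E) => \sum_(q <- l) (jf q.1 == j)%:R * q.2); split.
- move=> j; rewrite big_seq; apply: sumr_ge0 => q ql.
  by have [_ ?] := h1 q ql; apply: mulr_ge0.
- rewrite exchange_big /=; transitivity (\sum_(q <- l) q.2); last exact: h2.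
  rewrite big_seq [in RHS]big_seq; apply: eq_bigr => q ql.
  exact: (sum_pick (Ordinal (jlt q ql)) (fun _ => q.2)).
- move=> i; rewrite hv; apply: ler_wpM2l => //.
  rewrite h3 /=.
  under eq_bigr do rewrite mulr_suml.
  rewrite exchange_big /= big_seq [in X in _ <= X]big_seq; apply: ler_sum => q ql.
  have -> : \sum_(j < size E) (jf q.1 == j)%:R * q.2 * mE E j i = q.2 * mE E (Ordinal (jlt q ql)) i.
    rewrite -(sum_pick (Ordinal (jlt q ql)) (fun j => q.2 * mE E j i)).
    by apply: eq_bigr => j _; rewrite -mulrA.
  have [_ q0] := h1 q ql.
  rewrite mulrC (mulrC q.2); apply: ler_wpM2r => //.
  rewrite /mE ler_nat.
  have := nth_find 0%MM (hE _ (proj1 (h1 q ql))) => /mnm_lepP; apply.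
Qed.

Lemma R2 (E : seq 'X_{1..d}) (hE1 : forall m, m \in E -> EI m) r (a : 'X_{1..d}) (a' : 'I_d -> nat) :
  0 < r -> (forall i, (a' i <= a i)%N) -> Qr (mE E) (fun i => (a' i)%:R) r ->
  in_scaled_NP I r a.
Proof.
move=> r0 aa [lam [l0 l1 lb]].
pose v i := \sum_j lam j * mE E j i.
have hv : NPc v 1.
  exists [seq (nth 0%MM E j, lam j) | j : 'I_(size E) <- index_enum 'I_(size E)]; split.
  - move=> q /mapP [j _ ->] /=; split => //; apply: hE1; exact: mem_nth.
  - by rewrite big_map.
  - by move=> i; rewrite big_map.
pose w i := (a i)%:R / r.
have hw : NPc w 1.
  apply: NP_up hv _ => i; rewrite /w ler_pdivlMr // mulrC.
  apply: le_trans (lb i) _; rewrite ler_nat; exact: aa.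
exists w => // i; by rewrite /w mulrC divfK // gt_eqF.
Qed.

Lemma ideal_mono (S S' : 'X_{1..d} -> Prop) p :
  (forall a, S a -> S' a) -> monomial_ideal (K := K) S p -> monomial_ideal (K := K) S' p.
Proof.
move=> SS [l [h1 h2]]; exists l; split => // q ql.
by have [m Sm e] := h1 q ql; exists m => //; apply: SS.
Qed.

Lemma cap_lem E (M : R) (N : nat) t r (a : 'I_d -> nat) :
  0 <= t -> t <= r -> (forall j i, mE E j i <= M) -> r * M <= N%:R ->
  Qr (mE E) (fun i => (a i)%:R) t -> Qr (mE E) (fun i => (minn (a i) N)%:R) t.
Proof.
move=> t0 tr hM hN [lam [l0 l1 lb]]; exists lam; split => // i /=.
case: (leqP (a i) N) => h.
  exact: (lb i).
apply: le_trans hN.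
apply: ler_pM => //.
  by apply: sumr_ge0 => j _; apply: mulr_ge0 => //; rewrite /mE ler0n.
apply: le_trans (ler_sum _ (fun j _ => ler_wpM2l (l0 j) (hM j i))) _.
by rewrite -mulr_suml l1 mul1r.
Qed.

Lemma fin_lem E (r : R) (N : nat) : 0 < r -> exists2 e, 0 < e &
  forall c : {ffun 'I_d -> 'I_N.+1}, forall t, r - e < t -> t <= r ->
    Qr (mE E) (fun i => ((c i : nat))%:R) t -> Qr (mE E) (fun i => ((c i : nat))%:R) r.
Proof.
move=> r0.
have one : forall b : 'I_d -> R, exists2 e, 0 < e &
    forall t, r - e < t -> t <= r -> Qr (mE E) b t -> Qr (mE E) b r.
  move=> b; case: (classic (Qr (mE E) b r)) => [q|nq].
    by exists 1.
  case: (classic (exists e, 0 < e /\ forall t, r - e < t -> t <= r -> ~ Qr (mE E) b t))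
    => [[e [e0 he]]|ne].
    by exists e => // t t1 t2 qt; case: (he t t1 t2 qt).
  case: nq; apply: (@closedQ R (size E) d (mE E) b r r0) => e e0.
  apply: NNPP => nex; apply: ne; exists e; split => // t t1 t2 qt; apply: nex.
  by exists t; split.
have all : forall s : seq {ffun 'I_d -> 'I_N.+1}, exists2 e, 0 < e &
    forall c, c \in s -> forall t, r - e < t -> t <= r ->
    Qr (mE E) (fun i => ((c i : nat))%:R) t -> Qr (mE E) (fun i => ((c i : nat))%:R) r.
  elim=> [|c s [e e0 he]]; first by exists 1.
  have [e' e'0 he'] := one (fun i => ((c i : nat))%:R).
  exists (Order.min e e'); first by rewrite lt_min e0 e'0.
  move=> c'; rewrite inE => /orP[/eqP ->|cs] t t1 t2.
    apply: (he' t _ t2); apply: le_lt_trans t1; rewrite lerD2l lerN2 ge_min lexx orbT //.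
  apply: (he c' cs t _ t2); apply: le_lt_trans t1; rewrite lerD2l lerN2 ge_min lexx //.
have [e e0 he] := all (enum {ffun 'I_d -> 'I_N.+1}).
exists e => // c; apply: he; by rewrite mem_enum.
Qed.

Lemma main_sec (r : R) : 0 < r -> exists eps0 : R, [/\ 0 < eps0, eps0 <= r &
    forall eps : R, 0 < eps -> eps < eps0 ->
      forall p : {mpoly K[d]},
        real_power I (r - eps) p <-> real_power I r p].
Proof.
move=> r0.
have [E [E1 E2]] := dickson EI.
have hE : forall a, EI a -> has (fun m => (m <= a)%MM) E.
  by move=> a /E2 [m mE ma]; apply/hasP; exists m.
pose Mx := (\max_(m <- E) \max_(i < d) m i)%N.
have hM : forall j i, mE E j i <= Mx%:R.
  move=> j i; rewrite /mE ler_nat.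
  apply: leq_trans (leq_bigmax i) _.
  exact: (@leq_bigmax_seq _ E xpredT (fun m : 'X_{1..d} => \max_(i < d) m i) _ (mem_nth _ (ltn_ord j)) isT).
pose N := Num.Def.archi_bound (r * Mx%:R).
have hN : r * Mx%:R <= N%:R.
  by apply/ltW/archi_boundP/mulr_ge0; [apply: ltW | rewrite ler0n].
have [e e0 he] := fin_lem E N r0.
exists (Order.min r e); split.
- by rewrite lt_min r0 e0.
- by rewrite ge_min lexx.
move=> eps eps0 epsm p.
have er : eps < r by apply: lt_le_trans epsm _; rewrite ge_min lexx.
have ee : eps < e by apply: lt_le_trans epsm _; rewrite ge_min lexx orbT.
set t := r - eps.
have t0 : 0 < t by rewrite subr_gt0.
have tr : t <= r by rewrite lerBlDr lerDl ltW.
have key : forall a, in_scaled_NP I t a <-> in_scaled_NP I r a.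
  move=> a; split.
  - move=> h.
    have q1 := R1 hE (ltW t0) h.
    have q2 := cap_lem (ltW t0) tr hM hN q1.
    pose c : {ffun 'I_d -> 'I_N.+1} := [ffun i => inord (minn (a i) N)].
    have cE : forall i, ((c i : nat)) = minn (a i) N.
      by move=> i; rewrite ffunE inordK // ltnS geq_minr.
    have q3 : Qr (mE E) (fun i => ((c i : nat))%:R) t.
      have -> : (fun i => ((c i : nat))%:R) = (fun i => (minn (a i) N)%:R :> R).
        by apply: funext => i; rewrite cE.
      exact: q2.
    have rt : r - e < t by rewrite /t ltrD2l ltrN2.
    have q4 := he c t rt tr q3.
    apply: (@R2 E E1 r a (fun i => minn (a i) N) r0).
      by move=> i; exact: geq_minl.
    move: q4; have -> // : (fun i => ((c i : nat))%:R) = (fun i => (minn (a i) N)%:R :> R).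
    by apply: funext => i; rewrite cE.
  - move=> [v hv ha].
    have v0 : forall i, 0 <= v i.
      have [l [h1 _ h3]] := hv => i; rewrite h3 big_seq; apply: sumr_ge0 => q ql.
      by have [_ ?] := h1 q ql; apply: mulr_ge0 => //; rewrite ler0n.
    exists (fun i => r / t * v i).
      apply: (NP_up hv) => i; apply: ler_peMl => //.
      by rewrite ler_pdivlMr // mul1r.
    move=> i; rewrite ha mulrA [t * _]mulrCA mulfV ?mulr1 //.
    by rewrite gt_eqF.
split; apply: ideal_mono => a; by move/key.
Qed.

End NPsec.

Theorem proposition5p6 (K : fieldType) (d : nat) (R : realType)
    (G : 'X_{1..d} -> Prop) (r : R) :
  0 < r ->
  exists eps0 : R, [/\ 0 < eps0, eps0 <= r &
    forall eps : R, 0 < eps -> eps < eps0 ->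
      forall p : {mpoly K[d]},
        real_power (monomial_ideal G) (r - eps) p <->
        real_power (monomial_ideal G) r p].
Proof.
move=> r0; exact: (@main_sec K d R G r r0).
Qed.
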